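(* Let $(A,\mathcal N,\mathcal P,\lambda)$ be a game and $(\sigma,\phi)$ a uniform strategy on it. Then the set $\mathcal S_\phi(\sigma)$ of all bijections $\theta:x\cong y$ between configurations of $\sigma$ such that $\theta$ is the restriction to $x$ of $\phi_\alpha$ for some $\alpha\in\mathcal N$ (with $y=\phi_\alpha(x)$) is an isomorphism family on the event structure $\sigma$, and $p_\sigma$ is a map of event structures with symmetry $(\sigma,\mathcal S_\phi(\sigma))\to(A,\mathcal S)$, where $\mathcal S$ is the closure under composition of $\mathcal S_{\mathcal N}(A)\cup\mathcal S_{\mathcal P}(A)$.
   Context: Event structure: a set with a partial order $\leq$ with finitely many elements below each element, an irreflexive symmetric hereditary conflict $\#$ (if $a\leq a'$, $a\#b$ then $a'\#b$), and polarity into $\{-,+\}$. Configurations: finite down-closed conflict-free subsets, $\mathrm{Conf}(\cdot)$. $x\subseteq^+y$ (resp. $\subseteq^-$): $x\subseteq y$ with $y\setminus x$ all positive (resp. negative). Map of event structures: polarity-preserving function mapping configurations to configurations and injective on each configuration. Automorphism: bijection preserving and reflecting $\leq,\#$, polarity; it fixes $x$ if identity on $x$; negative if whenever it fixes $x$ and $x\subseteq^+y$ it fixes $y$; positive likewise with $\subseteq^-$. Group actions are homomorphisms into automorphism groups. A game $(A,\mathcal N,\mathcal P,\lambda)$: $\mathcal N$ a group acting on $A$ by negative automorphisms, $\mathcal P$ by positive automorphisms, $\lambda:\mathcal N\times\mathcal P\to\mathcal P\times\mathcal N$ with (i) $\lambda(e,\beta)=(\beta,e)$, $\lambda(\alpha,e)=(e,\alpha)$;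 (ii) if $\lambda(\alpha',\beta)=(\beta_1,\alpha_1)$, $\lambda(\alpha,\beta_1)=(\beta_2,\alpha_2)$ then $\lambda(\alpha\alpha',\beta)=(\beta_2,\alpha_2\alpha_1)$; (iii) if $\lambda(\alpha,\beta)=(\beta_1,\alpha_1)$, $\lambda(\alpha_1,\beta')=(\beta_2,\alpha_2)$ then $\lambda(\alpha,\beta\beta')=(\beta_1\beta_2,\alpha_2)$; (iv) if $\lambda(\alpha,\beta)=(\beta',\alpha')$ then $\alpha(\beta(a))=\beta'(\alpha'(a))$ for all $a$. For a group $G$ acting on $A$, $\mathcal S_G(A)$ is the set of bijections $x\cong g(x)$ ($x\in\mathrm{Conf}(A)$, $g\in G$) obtained by restricting $g$ to $x$. A strategy on $A$ is an event structure $\sigma$ with a map $p_\sigma:\sigma\to A$ such that for every $x\in\mathrm{Conf}(\sigma)$: if $p_\sigma(x)\subseteq^-z$ there is a unique $y\in\mathrm{Conf}(\sigma)$ with $x\subseteq y$, $p_\sigma(y)=z$; if $z\subseteq^+p_\sigma(x)$ there is $y\subseteq x$ in $\mathrm{Conf}(\sigma)$ with $p_\sigma(y)=z$. A weak map $\sigma\to\tau$ is a map $f$ with elements $f[x]\in\mathcal P$ ($x\in\mathrm{Conf}(\sigma)$) such that $f[x](p_\tau(f(s)))=p_\sigma(s)$ for $s\in x$. $\alpha\cdot\sigma$ is $\sigma$ with projection $\alpha\circ p_\sigma$. A uniform strategy is a strategy $\sigma$ with weak maps $\phi_\alpha:\alpha\cdot\sigma\to\sigma$ ($\alpha\in\mathcal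 N$) such that for all $x\in\mathrm{Conf}(\sigma)$: $\phi_e(x)=x$, $\phi_e[x]=e$; and for all $\alpha,\alpha'\in\mathcal N$, with $y=\phi_\alpha(x)$ and $(\gamma,\beta)=\lambda(\alpha',\phi_\alpha[x])$: $\phi_{\alpha'\alpha}(x)=\phi_\beta(y)$ and $\phi_{\alpha'\alpha}[x]=\gamma\,\phi_\beta[y]$. An isomorphism family on an event structure $E$ is a set $\mathcal S$ of polarity-preserving bijections between configurations, containing all identities, closed under composition and inverses, such that for $\theta:x\cong y$ in $\mathcal S$: restrictions of $\theta$ to subconfigurations $x'\subseteq x$ are in $\mathcal S$, and for every configuration $x'\supseteq x$ there is $\theta':x'\cong y'$ in $\mathcal S$ restricting to $\theta$ on $x$. A map of event structures with symmetry $(E,\mathcal S_E)\to(F,\mathcal S_F)$ is a map of event structures $f:E\to F$ such that for every $\theta:x\cong y$ in $\mathcal S_E$, the bijection $f(x)\cong f(y)$, $f(a)\mapsto f(\theta(a))$, is in $\mathcal S_F$. *)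

(* Defs.v *)
From Stdlib Require Import List.

Record ES := {
  ev   : Type;
  leq  : ev -> ev -> Prop;
  cfl  : ev -> ev -> Prop;
  pol  : ev -> bool;                (* true = +, false = - *)
  leq_refl  : forall a, leq a a;
  leq_antis : forall a b, leq a b -> leq b a -> a = b;
  leq_trans : forall a b c, leq a b -> leq b c -> leq a c;
  fin_causes : forall a, exists l : list ev, forall b, leq b a -> In b l;
  cfl_irrefl : forall a, ~ cfl a a;
  cfl_sym : forall a b, cfl a b -> cfl b a;
  cfl_hered : forall a a' b, leq a a' -> cfl a b -> cfl a' b
}.

Definition set_eq {T} (x y : T -> Prop) := forall a, x a <-> y a.
Definition subset {T} (x y : T -> Prop) := forall a, x a -> y a.
Definition image {T U} (f : T -> U) (x : T -> Prop) : U -> Prop :=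
  fun b => exists a, x a /\ f a = b.

Definition conf (E : ES) (x : ev E -> Prop) : Prop :=
  (exists l : list (ev E), forall a, x a -> In a l) /\
  (forall a b, x a -> leq E b a -> x b) /\
  (forall a b, x a -> x b -> ~ cfl E a b).

Definition subpos (E : ES) (x y : ev E -> Prop) :=
  subset x y /\ forall a, y a -> ~ x a -> pol E a = true.
Definition subneg (E : ES) (x y : ev E -> Prop) :=
  subset x y /\ forall a, y a -> ~ x a -> pol E a = false.

Definition es_map (E F : ES) (f : ev E -> ev F) : Prop :=
  (forall a, pol F (f a) = pol E a) /\
  forall x, conf E x ->
    conf F (image f x) /\ (forall a b, x a -> x b -> f a = f b -> a = b).

Definition automorphism (E : ES) (g : ev E -> ev E) : Prop :=
  (exists h : ev E -> ev E, (forall a, h (g a) = a) /\ (forall a, g (h a) = a)) /\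
  (forall a b, leq E (g a) (g b) <-> leq E a b) /\
  (forall a b, cfl E (g a) (g b) <-> cfl E a b) /\
  (forall a, pol E (g a) = pol E a).

Definition fixes (E : ES) (g : ev E -> ev E) (x : ev E -> Prop) :=
  forall a, x a -> g a = a.

Definition negative_aut (E : ES) (g : ev E -> ev E) :=
  automorphism E g /\
  forall x y, conf E x -> conf E y -> fixes E g x -> subpos E x y -> fixes E g y.
Definition positive_aut (E : ES) (g : ev E -> ev E) :=
  automorphism E g /\
  forall x y, conf E x -> conf E y -> fixes E g x -> subneg E x y -> fixes E g y.

Record Group := {
  gcar : Type;
  gmul : gcar -> gcar -> gcar;
  gone : gcar;
  ginv : gcar -> gcar;
  gmulA : forall a b c, gmul a (gmul b c) = gmul (gmul a b) c;
  gmul1l : forall a, gmul gone a = a;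
  gmul1r : forall a, gmul a gone = a;
  gmulVl : forall a, gmul (ginv a) a = gone;
  gmulVr : forall a, gmul a (ginv a) = gone
}.

Definition action (G : Group) (E : ES) (act : gcar G -> ev E -> ev E) : Prop :=
  (forall g, automorphism E (act g)) /\
  (forall a, act (gone G) a = a) /\
  (forall g h a, act (gmul G g h) a = act g (act h a)).

Record Game := {
  gA : ES;
  gN : Group;
  gP : Group;
  actN : gcar gN -> ev gA -> ev gA;
  actP : gcar gP -> ev gA -> ev gA;
  lam : gcar gN -> gcar gP -> gcar gP * gcar gN;
  actN_action : action gN gA actN;
  actN_neg : forall al, negative_aut gA (actN al);
  actP_action : action gP gA actP;
  actP_pos : forall be, positive_aut gA (actP be);
  lam_e_l : forall be, lam (gone gN) be = (be, gone gN);
  lam_e_r : forall al, lam al (gone gP) = (gone gP, al);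
  lam_mulN : forall al al' be be1 al1 be2 al2,
      lam al' be = (be1, al1) -> lam al be1 = (be2, al2) ->
      lam (gmul gN al al') be = (be2, gmul gN al2 al1);
  lam_mulP : forall al be be' be1 al1 be2 al2,
      lam al be = (be1, al1) -> lam al1 be' = (be2, al2) ->
      lam al (gmul gP be be') = (gmul gP be1 be2, al2);
  lam_act : forall al be be' al', lam al be = (be', al') ->
      forall a, actN al (actP be a) = actP be' (actN al' a)
}.

Definition strategy (A sigma : ES) (p : ev sigma -> ev A) : Prop :=
  es_map sigma A p /\
  (forall x, conf sigma x ->
     (forall z, conf A z -> subneg A (image p x) z ->
        (exists y, conf sigma y /\ subset x y /\ set_eq (image p y) z) /\
        (forall y1 y2, conf sigma y1 -> subset x y1 -> set_eq (image p y1) z ->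
                       conf sigma y2 -> subset x y2 -> set_eq (image p y2) z ->
                       set_eq y1 y2)) /\
     (forall z, conf A z -> subpos A z (image p x) ->
        exists y, conf sigma y /\ subset y x /\ set_eq (image p y) z)).

(* weak map  al.sigma -> sigma  (al.sigma has projection actN al o p) *)
Definition weak_map_act (Gm : Game) (sigma : ES) (p : ev sigma -> ev (gA Gm))
    (al : gcar (gN Gm)) (f : ev sigma -> ev sigma)
    (fb : (ev sigma -> Prop) -> gcar (gP Gm)) : Prop :=
  es_map sigma sigma f /\
  forall x, conf sigma x -> forall s, x s ->
    actP Gm (fb x) (p (f s)) = actN Gm al (p s).

Definition uniform (Gm : Game) (sigma : ES) (p : ev sigma -> ev (gA Gm))
    (phi : gcar (gN Gm) -> ev sigma -> ev sigma)
    (phib : gcar (gN Gm) -> (ev sigma -> Prop) -> gcar (gP Gm)) : Prop :=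
  strategy (gA Gm) sigma p /\
  (forall al, weak_map_act Gm sigma p al (phi al) (phib al)) /\
  (forall x, conf sigma x ->
     set_eq (image (phi (gone (gN Gm))) x) x /\ phib (gone (gN Gm)) x = gone (gP Gm)) /\
  (forall x, conf sigma x -> forall al al',
     let y := image (phi al) x in
     let gb := lam Gm al' (phib al x) in
     set_eq (image (phi (gmul (gN Gm) al' al)) x) (image (phi (snd gb)) y) /\
     phib (gmul (gN Gm) al' al) x = gmul (gP Gm) (fst gb) (phib (snd gb) y)).

(* A bijection theta : x ≅ y is represented by (x, y, theta) where only the
   values of theta on x matter. *)
Definition pbij (E : ES) (x y : ev E -> Prop) (th : ev E -> ev E) : Prop :=
  conf E x /\ conf E y /\
  (forall a, x a -> y (th a)) /\
  (forall a b, x a -> x b -> th a = th b -> a = b) /\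
  (forall b, y b -> exists a, x a /\ th a = b) /\
  (forall a, x a -> pol E (th a) = pol E a).

Definition iso_family (E : ES) (S : (ev E -> Prop) -> (ev E -> Prop) -> (ev E -> ev E) -> Prop) : Prop :=
  (forall x y th, S x y th -> pbij E x y th) /\
  (forall x, conf E x -> S x x (fun a => a)) /\
  (forall x y z th th', S x y th -> S y z th' -> S x z (fun a => th' (th a))) /\
  (forall x y th th', S x y th ->
     (forall b, y b -> x (th' b) /\ th (th' b) = b) -> S y x th') /\
  (forall x y th x', S x y th -> conf E x' -> subset x' x -> S x' (image th x') th) /\
  (forall x y th x', S x y th -> conf E x' -> subset x x' ->
     exists y' th', S x' y' th' /\ forall a, x a -> th' a = th a).

Definition sym_map (E F : ES)
    (SE : (ev E -> Prop) -> (ev E -> Prop) -> (ev E -> ev E) -> Prop)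
    (SF : (ev F -> Prop) -> (ev F -> Prop) -> (ev F -> ev F) -> Prop)
    (f : ev E -> ev F) : Prop :=
  es_map E F f /\
  forall x y th, SE x y th ->
    forall g : ev F -> ev F, (forall a, x a -> g (f a) = f (th a)) ->
      SF (image f x) (image f y) g.

Definition S_act (G : Group) (E : ES) (act : gcar G -> ev E -> ev E)
    (x y : ev E -> Prop) (th : ev E -> ev E) : Prop :=
  conf E x /\ exists g, set_eq y (image (act g) x) /\ forall a, x a -> th a = act g a.

Inductive S_game (Gm : Game) : (ev (gA Gm) -> Prop) -> (ev (gA Gm) -> Prop) ->
    (ev (gA Gm) -> ev (gA Gm)) -> Prop :=
| SgN : forall x y th, S_act (gN Gm) (gA Gm) (actN Gm) x y th -> S_game Gm x y th
| SgP : forall x y th, S_act (gP Gm) (gA Gm) (actP Gm) x y th -> S_game Gm x y th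
| Sgcomp : forall x y y' z th1 th2 th, S_game Gm x y th1 -> S_game Gm y' z th2 ->
    set_eq y y' -> (forall a, x a -> th a = th2 (th1 a)) -> S_game Gm x z th.

Definition S_phi (Gm : Game) (sigma : ES)
    (phi : gcar (gN Gm) -> ev sigma -> ev sigma)
    (x y : ev sigma -> Prop) (th : ev sigma -> ev sigma) : Prop :=
  conf sigma x /\ exists al, set_eq y (image (phi al) x) /\ forall s, x s -> th s = phi al s.

(* Main.v *)
Require Import Defs.
From Stdlib Require Import List.

Lemma conf_ext (E : ES) (x y : ev E -> Prop) : conf E x -> set_eq x y -> conf E y.
Proof.
  intros [[l Hl] [Hd Hc]] He. split; [|split].
  - exists l. intros a Ha. apply Hl, He, Ha.
  - intros a b Ha Hb. apply He. apply (Hd a b); [apply He|]; auto.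
  - intros a b Ha Hb. apply Hc; apply He; auto.
Qed.

Lemma conf_aut (E : ES) (g : ev E -> ev E) (x : ev E -> Prop) :
  automorphism E g -> conf E x -> conf E (image g x).
Proof.
  intros [[h [Hhg Hgh]] [Hle [Hcf _]]] [[l Hl] [Hd Hc]]. split; [|split].
  - exists (map g l). intros a [a0 [Ha0 <-]]. apply in_map, Hl, Ha0.
  - intros a b [a0 [Ha0 <-]] Hb. exists (h b). split; [|apply Hgh].
    apply (Hd a0); auto. apply Hle. rewrite Hgh. exact Hb.
  - intros a b [a0 [Ha0 <-]] [b0 [Hb0 <-]] Hab. exact (Hc a0 b0 Ha0 Hb0 (proj1 (Hcf a0 b0) Hab)).
Qed.

Lemma actP_mul (Gm : Game) c d a : actP Gm (gmul (gP Gm) c d) a = actP Gm c (actP Gm d a).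
Proof. destruct (actP_action Gm) as [_ [_ H]]. apply H. Qed.
Lemma actN_mul (Gm : Game) c d a : actN Gm (gmul (gN Gm) c d) a = actN Gm c (actN Gm d a).
Proof. destruct (actN_action Gm) as [_ [_ H]]. apply H. Qed.

Lemma actP_cancel (Gm : Game) c a : actP Gm (ginv (gP Gm) c) (actP Gm c a) = a.
Proof. rewrite <- actP_mul, gmulVl. destruct (actP_action Gm) as [_ [H _]]. apply H. Qed.

Lemma actP_inj (Gm : Game) c a b : actP Gm c a = actP Gm c b -> a = b.
Proof. intros H. rewrite <- (actP_cancel Gm c a), <- (actP_cancel Gm c b), H. reflexivity. Qed.

Lemma KEY (Gm : Game) (sigma : ES) (p : ev sigma -> ev (gA Gm))
    (phi : gcar (gN Gm) -> ev sigma -> ev sigma)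
    (phib : gcar (gN Gm) -> (ev sigma -> Prop) -> gcar (gP Gm)) :
  uniform Gm sigma p phi phib ->
  forall x, conf sigma x -> forall al al' s, x s ->
  phi (gmul (gN Gm) al' al) s = phi (snd (lam Gm al' (phib al x))) (phi al s).
Proof.
  intros [[[Hpol Hpc] _] [Hwm [_ Hc]]] x Hx al al' s Hs.
  destruct (Hc x Hx al al') as [Himg Hb]. cbv zeta in Himg, Hb.
  destruct (lam Gm al' (phib al x)) as [g be] eqn:HL. simpl in *.
  set (y := image (phi al) x) in *.
  destruct (Hwm al) as [[_ Hm1] Hw1].
  destruct (Hm1 x Hx) as [Hy _].
  destruct (Hwm (gmul (gN Gm) al' al)) as [[_ Hm3] Hw3].
  destruct (Hm3 x Hx) as [Hz _].
  destruct (Hwm be) as [_ Hw2].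
  assert (Hyt : y (phi al s)) by (exists s; auto).
  apply (proj2 (Hpc _ Hz)).
  - exists s; auto.
  - apply Himg. exists (phi al s). auto.
  - apply (actP_inj Gm (phib (gmul (gN Gm) al' al) x)).
    rewrite (Hw3 x Hx s Hs). rewrite Hb, actP_mul, (Hw2 y Hy _ Hyt).
    rewrite <- (lam_act Gm _ _ _ _ HL). rewrite (Hw1 x Hx s Hs).
    rewrite actN_mul; reflexivity.
Qed.

Lemma ID_pt (Gm : Game) (sigma : ES) (p : ev sigma -> ev (gA Gm))
    (phi : gcar (gN Gm) -> ev sigma -> ev sigma)
    (phib : gcar (gN Gm) -> (ev sigma -> Prop) -> gcar (gP Gm)) :
  uniform Gm sigma p phi phib ->
  forall x, conf sigma x -> forall s, x s -> phi (gone (gN Gm)) s = s.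
Proof.
  intros [[[Hpol Hpc] _] [Hwm [Hid _]]] x Hx s Hs.
  destruct (Hid x Hx) as [Hi Hb].
  destruct (Hwm (gone (gN Gm))) as [_ Hw].
  apply (proj2 (Hpc _ Hx)); auto.
  - apply Hi. exists s; auto.
  - pose proof (Hw x Hx s Hs) as H. rewrite Hb in H.
    destruct (actP_action Gm) as [_ [H1 _]]. destruct (actN_action Gm) as [_ [H2 _]].
    rewrite H1, H2 in H. exact H.
Qed.

Lemma lam_inv (Gm : Game) al b :
  snd (lam Gm (snd (lam Gm al (ginv (gP Gm) b))) b) = al.
Proof.
  destruct (lam Gm al (ginv (gP Gm) b)) as [b1 g] eqn:H1.
  destruct (lam Gm g b) as [b2 a2] eqn:H2. simpl.
  pose proof (lam_mulP Gm _ _ _ _ _ _ _ H1 H2) as H.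
  rewrite gmulVl, lam_e_r in H. injection H; intros; subst. rewrite H2; reflexivity.
Qed.

Theorem mainTheorem7 (Gm : Game) (sigma : ES) (p : ev sigma -> ev (gA Gm))
    (phi : gcar (gN Gm) -> ev sigma -> ev sigma)
    (phib : gcar (gN Gm) -> (ev sigma -> Prop) -> gcar (gP Gm)) :
  uniform Gm sigma p phi phib ->
  iso_family sigma (S_phi Gm sigma phi) /\
  sym_map sigma (gA Gm) (S_phi Gm sigma phi) (S_game Gm) p.
Proof.
  intros U.
  pose proof (KEY _ _ _ _ _ U) as K.
  pose proof (ID_pt _ _ _ _ _ U) as I.
  destruct U as [[[Hpol Hpc] Hstr] [Hwm [Hid Hc]]].
  assert (Hmap : forall al, (forall a, pol sigma (phi al a) = pol sigma a) /\
    forall x, conf sigma x -> conf sigma (image (phi al) x) /\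
      (forall a b, x a -> x b -> phi al a = phi al b -> a = b))
    by (intro al; exact (proj1 (Hwm al))).
  split; [split; [|split; [|split; [|split; [|split]]]]|].
  -
    intros x y th [Hx [al [Hy Hth]]].
    destruct (Hmap al) as [Hp Hm]. destruct (Hm x Hx) as [Hcy Hinj].
    split; [auto|split; [|split; [|split; [|split]]]].
    + apply (conf_ext _ _ _ Hcy). intro a; split; apply Hy.
    + intros a Ha. apply Hy. exists a. rewrite Hth; auto.
    + intros a b Ha Hb E. rewrite !Hth in E; auto.
    + intros b Hb. apply Hy in Hb. destruct Hb as [a [Ha <-]]. exists a. rewrite Hth; auto.
    + intros a Ha. rewrite Hth; auto.
  -
    intros x Hx. split; auto. exists (gone (gN Gm)). split.
    + intro a. split; intro H; apply (proj1 (Hid x Hx)); auto.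
    + intros s Hs. symmetry. apply (I x Hx s Hs).
  -
    intros x y z th th' [Hx [al [Hy Hth]]] [Hyc [al' [Hz Hth']]].
    split; auto.
    set (b := phib al x).
    set (g := snd (lam Gm al' (ginv (gP Gm) b))).
    exists (gmul (gN Gm) g al).
    assert (E : forall s, x s -> phi (gmul (gN Gm) g al) s = phi al' (phi al s)).
    { intros s Hs. rewrite (K x Hx al g s Hs). unfold g, b. rewrite lam_inv. reflexivity. }
    split.
    + intro c. split.
      * intro Hc'. apply Hz in Hc'. destruct Hc' as [t [Ht <-]].
        apply Hy in Ht. destruct Ht as [s [Hs <-]]. exists s. split; auto.
      * intros [s [Hs <-]]. apply Hz. exists (phi al s). split.
        -- apply Hy. exists s; auto.
        -- rewrite E; auto.
    + intros s Hs. rewrite E; auto. rewrite Hth; auto. apply Hth'.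
      apply Hy. exists s; auto.
  -
    intros x y th th' [Hx [al [Hy Hth]]] Hinv.
    destruct (Hmap al) as [_ Hm]. destruct (Hm x Hx) as [Hcy _].
    assert (Hyc : conf sigma y) by (apply (conf_ext _ _ _ Hcy); intro a; split; apply Hy).
    split; auto.
    set (b := phib al x).
    set (g := ginv (gN Gm) al).
    exists (snd (lam Gm g b)).
    assert (E : forall s, x s -> phi (snd (lam Gm g b)) (phi al s) = s).
    { intros s Hs. unfold b. rewrite <- (K x Hx al g s Hs). unfold g. rewrite gmulVl. apply (I x Hx s Hs). }
    split.
    + intro a. split.
      * intro Ha. exists (phi al a). split; [apply Hy; exists a; auto|]. apply E; auto.
      * intros [t [Ht <-]]. apply Hy in Ht. destruct Ht as [s [Hs <-]]. rewrite E; auto.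
    + intros t Ht. destruct (Hinv t Ht) as [H1 H2].
      pose proof Ht as Ht'. apply Hy in Ht'. destruct Ht' as [s [Hs <-]].
      rewrite Hth in H2; auto.
      rewrite E; auto.
      apply (proj2 (Hm x Hx)); auto.
  -
    intros x y th x' [Hx [al [Hy Hth]]] Hx' Hsub.
    split; auto. exists al. split.
    + intro a. split; intros [s [Hs <-]]; exists s; split; auto; rewrite Hth; auto.
    + intros s Hs. apply Hth; auto.
  -
    intros x y th x' [Hx [al [Hy Hth]]] Hx' Hsub.
    exists (image (phi al) x'), (phi al). split.
    + split; auto. exists al. split; [intro a; split; auto|auto].
    + intros a Ha. symmetry; auto.
  -
    split; [split; auto|].
    intros x y th [Hx [al [Hy Hth]]] gg Hgg.
    set (b := phib al x).
    destruct (Hwm al) as [_ Hw].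
    destruct (Hpc x Hx) as [Hpx _].
    assert (Hgg' : forall a, image p x a -> gg a = actP Gm (ginv (gP Gm) b) (actN Gm al a)).
    { intros a [s [Hs <-]]. rewrite Hgg, Hth; auto. rewrite <- (Hw x Hx s Hs).
      unfold b. rewrite actP_cancel. reflexivity. }
    apply (Sgcomp Gm (image p x) (image (actN Gm al) (image p x)) (image (actN Gm al) (image p x))
             (image p y) (actN Gm al) (actP Gm (ginv (gP Gm) b)) gg).
    + apply SgN. split; auto. exists al. split; [intro a; split; auto|auto].
    + apply SgP. split.
      * apply conf_aut; auto. apply (actN_action Gm).
      * exists (ginv (gP Gm) b). split; [|auto].
        intro c. split.
        -- intros [t [Ht <-]]. apply Hy in Ht. destruct Ht as [s [Hs <-]].
           exists (actN Gm al (p s)). split.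
           ++ exists (p s). split; auto. exists s; auto.
           ++ rewrite <- (Hw x Hx s Hs). unfold b. rewrite actP_cancel; reflexivity.
        -- intros [c0 [[a0 [[s [Hs <-]] <-]] <-]].
           exists (phi al s). split.
           ++ apply Hy. exists s; auto.
           ++ rewrite <- (Hw x Hx s Hs). unfold b. rewrite actP_cancel; reflexivity.
    + intro a; split; auto.
    + exact Hgg'.
Qed.
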